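(* Let $q=2^h$ with $h\equiv 1\pmod 2$ and let $$U=\left\{\left(x,\,y,\,x^q+y^{q^2},\,x^{q^2}+y^q+y^{q^2}\right): x,y\in\mathbb F_{q^4}\right\}\subseteq\mathbb F_{q^4}^4.$$ Then $U$ is $(2,3)_q$-evasive, i.e. $\dim_{\mathbb F_q}(U\cap H)\le 3$ for every $2$-dimensional $\mathbb F_{q^4}$-subspace $H$ of $\mathbb F_{q^4}^4$.
   Context: $U$ is an $\mathbb F_q$-subspace of $\mathbb F_{q^4}^4$ of $\mathbb F_q$-dimension $8$. *)

(* Defs.v *)
From HB Require Import structures.
From mathcomp Require Import all_boot all_order all_algebra all_field.
From mathcomp Require Import ring.
Set Implicit Arguments. Unset Strict Implicit. Unset Printing Implicit Defensive.
Import GRing.Theory.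
Local Open Scope ring_scope.

(* Setting: K is a finite field playing the role of F_q (q = #|K|),
   L is a degree-4 field extension of K (so L = F_{q^4}),
   V = L^4 viewed as a K-vector space ({ffun 'I_4 -> L} is a vectType K). *)

Definition L4 (K : finFieldType) (L : fieldExtType K) := {ffun 'I_4 -> L}.

Definition Umap (K : finFieldType) (L : fieldExtType K) (p : L * L) : L4 L :=
  let q := #|K| in
  let x := p.1 in let y := p.2 in
  [ffun i : 'I_4 =>
     [:: x; y; x ^+ q + y ^+ (q ^ 2); x ^+ (q ^ 2) + y ^+ q + y ^+ (q ^ 2)]`_i].

Definition Uspace (K : finFieldType) (L : fieldExtType K) : {vspace L4 L} :=
  limg (linfun (@Umap K L)).

(* For A : 'M[L]_(2,4), the map (a,b) |-> a * row 0 of A + b * row 1 of A;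
   its image is the L-row space of A, here seen as a K-subspace of L^4. *)
Definition rowmap (K : finFieldType) (L : fieldExtType K) (A : 'M[L]_(2, 4))
  (p : L * L) : L4 L :=
  [ffun i : 'I_4 => p.1 * A 0 i + p.2 * A 1 i].

Definition Hspace (K : finFieldType) (L : fieldExtType K) (A : 'M[L]_(2, 4))
  : {vspace L4 L} := limg (linfun (rowmap A)).

(* Sanity: rowmap is K-linear, so Hspace A is exactly the L-row space of A. *)
Lemma rowmap_linear (K : finFieldType) (L : fieldExtType K) (A : 'M[L]_(2, 4)) :
  linear (rowmap A).
Proof.
move=> k [a b] [c d]; apply/ffunP => i; rewrite !ffunE /=.
by rewrite !mulrDl scalerDr !scalerAl addrACA.
Qed.

Lemma rowmap_spec (K : finFieldType) (L : fieldExtType K) (A : 'M[L]_(2, 4))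
  (a b : L) (i : 'I_4) :
  a * A 0 i + b * A 1 i = (\row_(j < 2) [:: a; b]`_j *m A) 0 i.
Proof.
rewrite !mxE big_ord_recr big_ord1 !mxE /=.
by congr (_ * A _ _ + _ * A _ _); apply/val_inj.
Qed.

(* Sanity: Umap is K-linear when #|K| = 2^h, so Uspace is exactly U. *)
Lemma frob_linear (K : finFieldType) (L : fieldExtType K) h
  (cardK : #|K| = (2 ^ h)%N) (n : nat) (k : K) (x y : L) :
  (k *: x + y) ^+ (#|K| ^ n) = k *: x ^+ (#|K| ^ n) + y ^+ (#|K| ^ n).
Proof.
have p2 : (2%N \in [pchar K]) by apply: (card_finPcharP cardK).
have p2L : (2%N \in [pchar L]) by rewrite pchar_lalg.
rewrite exprDn_pchar; last first.
  by rewrite cardK -expnM pnatX (pnatE _ (pcharf_prime p2L)) p2L.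
rewrite -mulr_algl exprMn_comm; last exact: mulrC.
rewrite -[_%:A ^+ _](rmorphXn (in_alg L)) /=.
suff -> : k ^+ (#|K| ^ n) = k by rewrite mulr_algl.
elim: n => [|n IH]; first by rewrite expr1.
by rewrite expnS mulnC exprM IH expf_card.
Qed.

Lemma Umap_linear (K : finFieldType) (L : fieldExtType K) h
  (cardK : #|K| = (2 ^ h)%N) : linear (@Umap K L).
Proof.
have F n k x y := @frob_linear K L h cardK n k x y.
have F1 (k : K) (x y : L) : (k *: x + y) ^+ #|K| = k *: x ^+ #|K| + y ^+ #|K|.
  by have := F 1%N k x y; rewrite expn1.
move=> k [a b] [c d]; apply/ffunP => i; rewrite !ffunE /=.
case: i => [[|[|[|[|i]]]] Hi] //=; rewrite ?F ?F1 ?scalerDr.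
  by rewrite addrACA.
set A1 := k *: a ^+ (#|K| ^ 2); set B1 := k *: b ^+ #|K|.
set B2 := k *: b ^+ (#|K| ^ 2); clearbody A1 B1 B2; ring.
Qed.

(* Main.v *)
Require Import Defs.
From HB Require Import structures.
From mathcomp Require Import all_boot all_order all_algebra all_field.
From mathcomp Require Import ring zify.
Set Implicit Arguments. Unset Strict Implicit. Unset Printing Implicit Defensive.
Import GRing.Theory.
Local Open Scope ring_scope.

Section S.

Variables (h : nat) (h_odd : odd h) (K : finFieldType) (cardK : #|K| = (2 ^ h)%N)
  (L : fieldExtType K) (dimL : \dim (fullv : {vspace L}) = 4%N).

Definition F n (x : L) := x ^+ (#|K| ^ n).

Lemma h2 : (2%:R : L) = 0.
Proof.
have p2 : (2%N \in [pchar K]) by apply: (card_finPcharP cardK).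
have p2L : (2%N \in [pchar L]) by rewrite pchar_lalg.
exact: pcharf0 p2L.
Qed.

Lemma oppL (x : L) : - x = x.
Proof. by apply/eqP; rewrite eq_sym -subr_eq0 opprK -mulr2n -mulr_natr h2 mulr0. Qed.

Lemma FD n x y : F n (x + y) = F n x + F n y.
Proof. by have := @frob_linear K L h cardK n 1 x y; rewrite !scale1r. Qed.

Lemma FM n x y : F n (x * y) = F n x * F n y.
Proof. by rewrite /F exprMn. Qed.

Lemma F1 n : F n 1 = 1.
Proof. by rewrite /F expr1n. Qed.

Lemma qn_gt0 n : (0 < #|K| ^ n)%N.
Proof. by rewrite expn_gt0 cardK expn_gt0. Qed.

Lemma F0 n : F n 0 = 0.
Proof. by rewrite /F expr0n eqn0Ngt qn_gt0. Qed.

Lemma Fn0 x : F 0 x = x.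
Proof. by rewrite /F expn0 expr1. Qed.

Lemma FF m n x : F m (F n x) = F (m + n) x.
Proof. by rewrite /F -exprM -expnD addnC. Qed.

Lemma F4 x : F 4 x = x.
Proof.
have := Fermat's_little_theorem (aspacef L) x.
by rewrite memvf /= dimL => /esym/eqP.
Qed.

Lemma Fmod n x : F (n + 4) x = F n x.
Proof. by rewrite -FF F4. Qed.

Lemma Fsum n (I : Type) (r : seq I) (P : pred I) (G : I -> L) :
  F n (\sum_(i <- r | P i) G i) = \sum_(i <- r | P i) F n (G i).
Proof. by apply: (big_morph (F n)); [apply: FD | apply: F0]. Qed.

Lemma Feq0 n x : (F n x == 0) = (x == 0).
Proof. by rewrite /F expf_eq0 qn_gt0. Qed.

Lemma Finj n x y : F n x = F n y -> x = y.
Proof.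
move=> E; apply/eqP; rewrite -subr_eq0 -(Feq0 n) oppL FD E.
by rewrite -mulr2n -mulr_natl h2 mul0r.
Qed.

Lemma Ffix x : F 1 x = x -> exists k : K, x = k%:A.
Proof.
move=> E; have := Fermat's_little_theorem 1%AS x.
rewrite dimv1 -/(F 1 x) E eqxx => /vlineP [k ->].
by exists k.
Qed.


Lemma pow2_odd k : exists m, (2 ^ k.*2.+1 = 3 * m + 2)%N.
Proof.
elim: k => [|k [m Hm]]; first by exists 0%N.
exists (4 * m + 2)%N.
by rewrite doubleS expnS expnS Hm; lia.
Qed.

Lemma no_cuberoot (f : L) : f ^+ 2 + f + 1 = 0 -> F 1 f = f -> False.
Proof.
move=> E Ef.
have f3 : f ^+ 3 = 1.
  have -> : f ^+ 3 = (f - 1) * (f ^+ 2 + f + 1) + 1 by ring.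
  by rewrite E mulr0 add0r.
have [m Hm] := pow2_odd h./2.
have hE : h = (h./2.*2.+1)%N by rewrite -[h in LHS]odd_double_half h_odd.
move: Ef; rewrite /F expn1 cardK hE Hm exprD exprM f3 expr1n mul1r => f2.
move: E; rewrite f2 -mulr2n -mulr_natr h2 mulr0 add0r => /eqP.
by rewrite oner_eq0.
Qed.

Lemma q_gt1 : (1 < #|K|)%N.
Proof. by rewrite cardK -{1}(expn0 2) ltn_exp2l // lt0n; case: h h_odd. Qed.

Lemma trace_nz : exists lam : L, \sum_(i < 4) F i lam != 0.
Proof.
case: (pickP (fun lam : finvect_type L => \sum_(i < 4) F i lam != 0)) => [lam Hl|allz].
  by exists lam.
pose p : {poly L} := \sum_(i < 4) 'X^(#|K| ^ i).
have cardL : #|finvect_type L| = (#|K| ^ 4)%N.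
  by have := card_vspace (fullv : {vspace finvect_type L}); rewrite card_vspacef dimL.
have pnz : p != 0.
  apply/eqP => /(congr1 (fun r : {poly L} => r`_(#|K| ^ 3))).
  rewrite coef_sum coef0 !big_ord_recr big_ord0 /= !coefXn !eqn_exp2l ?q_gt1 //=.
  by rewrite !add0r => /eqP; rewrite oner_eq0.
have szp : (size p <= (#|K| ^ 3).+1)%N.
  apply: leq_trans (size_sum _ _ _) _; apply/bigmax_leqP => i _.
  by rewrite size_polyXn ltnS leq_pexp2l ?(ltnW q_gt1) // -ltnS.
have cE : size (enum (finvect_type L)) = (#|K| ^ 4)%N by rewrite -cardL cardE.
have := max_poly_roots pnz _ (enum_uniq (finvect_type L)).
have -> : all (root p) (enum (finvect_type L)).
  apply/allP => x _; rewrite /root horner_sum.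
  under eq_bigr => i _ do rewrite hornerXn.
  by move/negbT/negPn: (allz x).
move=> /(_ isT) H; have := leq_trans H szp.
by rewrite cE ltnS leqNgt ltn_exp2l ?q_gt1.
Qed.

Lemma indep4 (R : 'I_4 -> 'I_4 -> L) :
  (forall c : 'I_4 -> L, (forall k, \sum_j c j * R k j = 0) -> forall j, c j = 0) ->
  forall lam : 'I_4 -> L, (forall j, \sum_k lam k * R k j = 0) -> forall k, lam k = 0.
Proof.
move=> Hc lam Hl; pose P := \matrix_(k, j) R k j.
case: (boolP (\row_k lam k == 0)) => [/eqP/rowP H|nz] k.
  by have := H k; rewrite !mxE.
exfalso.
have dP : \det P == 0.
  apply/det0P; exists (\row_k lam k) => //; apply/rowP => j; rewrite !mxE.
  transitivity (\sum_k lam k * R k j); last exact: Hl j.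
  by apply: eq_bigr => i _; rewrite !mxE.
move: dP; rewrite -det_tr => /det0P [v vnz vP].
move/eqP: vnz; apply; apply/rowP => j; rewrite mxE.
apply: (Hc (fun j => v 0 j)) => k'.
have := congr1 (fun M : 'rV_4 => M 0 k') vP; rewrite !mxE => E.
rewrite -[RHS]E; by apply: eq_bigr => i _; rewrite !mxE.
Qed.

Lemma sum4 (G : nat -> L) : \sum_(i < 4) G i = G 0%N + G 1%N + G 2%N + G 3%N.
Proof. by rewrite !big_ord_recr big_ord0 /= add0r. Qed.

Lemma sumF i (mu : L) (c X : 'I_4 -> L) : (i <= 4)%N ->
  \sum_j F i (mu * c j) * X j = F i (mu * \sum_j c j * F (4 - i) (X j)).
Proof.
move=> Hi; rewrite mulr_sumr Fsum; apply: eq_bigr => j _.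
by rewrite !FM FF subnKC // F4 mulrA.
Qed.

Lemma descent (X Y : 'I_4 -> L)
  (Hfree : forall d : 'I_4 -> L, (forall j, F 1 (d j) = d j) ->
      \sum_j d j * X j = 0 -> \sum_j d j * Y j = 0 -> forall j, d j = 0)
  (c : 'I_4 -> L) (k0 : 'I_4) : c k0 != 0 ->
  (forall i, \sum_j c j * F i (X j) = 0 /\ \sum_j c j * F i (Y j) = 0) -> False.
Proof.
move=> ck0 Hc; have [lam Hlam] := trace_nz.
pose mu := lam / c k0.
pose d j := \sum_(i < 4) F i (mu * c j).
have dfix j : F 1 (d j) = d j.
  rewrite /d Fsum (sum4 (fun i => F 1 (F i _))) (sum4 (fun i => F i _)) !FF F4 Fn0.
  by rewrite addrC !addrA.
have dX (Z : 'I_4 -> L) : (forall i, \sum_j c j * F i (Z j) = 0) -> \sum_j d j * Z j = 0.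
  move=> HZ; rewrite /d; under eq_bigr => j _ do rewrite mulr_suml.
  rewrite exchange_big /=; apply: big1 => i _.
  by rewrite sumF ?HZ ?mulr0 ?F0 // ltnW.
have := Hfree d dfix (dX X (fun i => (Hc i).1)) (dX Y (fun i => (Hc i).2)) k0.
move=> E; have E' : \sum_(i < 4) F i lam = 0.
  by rewrite -[RHS]E; apply: eq_bigr => i _; rewrite /mu divfK.
by rewrite E' eqxx in Hlam.
Qed.

Lemma F11 x : F 1 (F 1 x) = F 2 x. Proof. by rewrite FF. Qed.
Lemma F12 x : F 1 (F 2 x) = F 3 x. Proof. by rewrite FF. Qed.
Lemma F21 x : F 2 (F 1 x) = F 3 x. Proof. by rewrite FF. Qed.
Lemma F22 x : F 2 (F 2 x) = x. Proof. by rewrite FF F4. Qed.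
Lemma F13 x : F 1 (F 3 x) = x. Proof. by rewrite FF F4. Qed.
Lemma F31 x : F 3 (F 1 x) = x. Proof. by rewrite FF F4. Qed.
Lemma FS1 i x : F i.+1 x = F i (F 1 x). Proof. by rewrite FF addn1. Qed.
Lemma FS2 i x : F i.+2 x = F i (F 2 x). Proof. by rewrite FF addn2. Qed.
Lemma Fn1 n : F n 1 = 1. Proof. exact: F1. Qed.

Lemma char2 (x y z : L) : x + y = z -> y = z + x.
Proof. by move=> <-; rewrite addrC addrA -mulr2n -mulr_natr h2 mulr0 add0r. Qed.

Lemma add2 (x : L) : x + x = 0.
Proof. by rewrite -mulr2n -mulr_natr h2 mulr0. Qed.

Lemma sum_lin (c A B C D : 'I_4 -> L) (k1 k2 : L) :
  \sum_j c j * (A j + B j + k1 * C j + k2 * D j) =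
  \sum_j c j * A j + \sum_j c j * B j + k1 * \sum_j c j * C j + k2 * \sum_j c j * D j.
Proof.
rewrite !mulr_sumr -!big_split /=; apply: eq_bigr => j _; ring.
Qed.

Lemma sum_lin3 (c A C D : 'I_4 -> L) (k1 k2 : L) :
  \sum_j c j * (A j + k1 * C j + k2 * D j) =
  \sum_j c j * A j + k1 * \sum_j c j * C j + k2 * \sum_j c j * D j.
Proof.
rewrite !mulr_sumr -!big_split /=; apply: eq_bigr => j _; ring.
Qed.

Lemma c2 (x y : L) : x + y = 0 -> x = y.
Proof. by move/eqP; rewrite addr_eq0 oppL => /eqP. Qed.

Lemma caseA_alg (a b e f : L)
  (q1 : f * F 2 f + a * (F 2 e + 1) - 1 = 0)
  (q2 : e * F 2 f + b * (F 2 e + 1) = 0)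
  (q3 : F 1 f + F 1 a + F 2 f + F 2 e + 1 = 0)
  (q4 : F 1 e + F 1 b + F 2 f = 0)
  (q7 : F 1 f + F 2 a + F 2 b = 0)
  (q8 : F 1 e + F 2 a + 1 = 0) : False.
Proof.
have hb : b = e + F 1 f.
  apply: c2; apply/eqP; rewrite -(Feq0 1) !FD F11; apply/eqP; rewrite -[RHS]q4; ring.
have h8 : F 2 a = F 1 e + 1 by apply: c2; rewrite -[RHS]q8; ring.
have h3 : F 1 a = F 1 f + F 2 f + F 2 e + 1 by apply: c2; rewrite -[RHS]q3; ring: h2.
have hbeta : F 2 e = F 3 f + f + e.
  have := congr1 (F 2) h3; rewrite F21 !FD F22 F21 F22 F1 => E1.
  have := congr1 (F 1) h8; rewrite F12 FD F11 F1 => E2.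
  by apply: (addIr 1); rewrite -E2 E1.
have hgamma : F 1 f + F 1 e + f + e + 1 = 0.
  rewrite -[RHS]q7 hb h8 FD F21; move: hbeta; rewrite -!F11 => ->; ring: h2.
have hf : F 1 f = f.
  have := congr1 (F 1) hgamma; rewrite !FD F0 F1 !F11 => E.
  have : F 2 f + F 3 f = 0.
    transitivity ((F 2 f + F 2 e + F 1 f + F 1 e + 1) + (F 1 f + F 1 e + f + e + 1)).
      by rewrite hbeta; ring: h2.
    by rewrite E hgamma addr0.
  move/c2; rewrite -F21 => /Finj.
  by move=> E2; rewrite -E2.
have he : F 1 e = e + 1 by apply: c2; rewrite -[RHS]hgamma hf; ring: h2.
have he2 : F 2 e = e by rewrite -F11 he FD F1 he; ring: h2.
have hf2 : F 2 f = f by rewrite -F11 !hf.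
have ha : a = e.
  apply: (@Finj 1); rewrite he h3 hf hf2 he2; ring: h2.
have hb' : b = e + f by rewrite hb hf.
have hfe : f = e ^+ 2 + e.
  apply: c2; rewrite -[RHS]q2 hf2 he2 hb'; ring: h2.
apply: (no_cuberoot _ hf).
rewrite -[RHS]q1 hf2 he2 ha hfe oppL; ring: h2.
Qed.

Notation o0 := (@Ordinal 4 0 isT).
Notation o1 := (@Ordinal 4 1 isT).
Notation o2 := (@Ordinal 4 2 isT).
Notation o3 := (@Ordinal 4 3 isT).

Lemma caseA (X Y : 'I_4 -> L) (a b c d : L)
  (Hfree : forall d : 'I_4 -> L, (forall j, F 1 (d j) = d j) ->
      \sum_j d j * X j = 0 -> \sum_j d j * Y j = 0 -> forall j, d j = 0)
  (R1 : forall j, F 1 (X j) + F 2 (Y j) = a * X j + b * Y j)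
  (R2 : forall j, F 2 (X j) + F 1 (Y j) + F 2 (Y j) = c * X j + d * Y j) : False.
Proof.
pose f := a + c; pose e := b + d.
have R1' j : F 2 (Y j) = F 1 (X j) + a * X j + b * Y j.
  by rewrite (char2 (R1 j)) addrC addrA.
have R2' j : F 2 (X j) = F 1 (X j) + F 1 (Y j) + f * X j + e * Y j.
  have E := R2 j; rewrite R1' in E.
  apply: (addIr (F 1 (Y j) + (F 1 (X j) + a * X j + b * Y j))).
  by rewrite addrA E /f /e; ring: h2.
clearbody f e.
pose R (k : nat) (j : 'I_4) := nth 0 [:: X j; Y j; F 1 (X j); F 1 (Y j)] k.
have Hind : forall c : 'I_4 -> L, (forall k : 'I_4, \sum_j c j * R k j = 0) -> forall j, c j = 0.
  move=> c0 Hk j0; apply/eqP/negPn/negP => cj0; apply: (descent Hfree cj0) => i.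
  suff: [/\ \sum_j c0 j * F i (X j) = 0, \sum_j c0 j * F i (Y j) = 0,
     \sum_j c0 j * F i.+1 (X j) = 0 & \sum_j c0 j * F i.+1 (Y j) = 0] by case.
  elim: i => [|i [IH1 IH2 IH3 IH4]].
    have := Hk o0; have := Hk o1; have := Hk o2; have := Hk o3.
    have Fn0' : forall Z : 'I_4 -> L, \sum_j c0 j * F 0 (Z j) = \sum_j c0 j * Z j.
      by move=> Z; apply: eq_bigr => j _; rewrite Fn0.
    by rewrite /R /= !Fn0' => -> -> -> ->.
  split=> //.
    under eq_bigr => j _ do rewrite FS2 R2' !FD !FM -!FS1.
    by rewrite sum_lin /= IH1 IH2 IH3 IH4 !mulr0 !addr0.
  under eq_bigr => j _ do rewrite FS2 R1' !FD !FM -!FS1.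
  by rewrite sum_lin3 /= IH1 IH2 IH3 !mulr0 !addr0.
have X3 j : F 3 (X j) = (f + a) * X j + (e + b) * Y j + F 1 f * F 1 (X j) + (F 1 e + 1) * F 1 (Y j).
  by rewrite -F12 R2' !FD !FM !F11 R1' R2'; ring: h2.
have Y3 j : F 3 (Y j) = f * X j + e * Y j + (F 1 a + 1) * F 1 (X j) + (F 1 b + 1) * F 1 (Y j).
  by rewrite -F12 R1' !FD !FM !F11 R2'; ring: h2.
pose a1 := f * F 2 f + a * (F 2 e + 1).
pose a2 := e * F 2 f + b * (F 2 e + 1).
pose a3 := F 1 f + F 1 a + F 2 f + F 2 e + 1.
pose a4 := F 1 e + F 1 b + F 2 f.
pose b1 := f * (F 2 a + 1) + a * (F 2 b + 1).
pose b2 := e * (F 2 a + 1) + b * (F 2 b + 1).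
pose b3 := F 1 f + F 2 a + F 2 b.
pose b4 := F 1 e + F 2 a + 1.
have X4 j : X j = a1 * X j + a2 * Y j + a3 * F 1 (X j) + a4 * F 1 (Y j).
  by rewrite -{1}(F13 (X j)) X3 !FD !FM !FD !F11 ?F1 R1' R2' /a1 /a2 /a3 /a4; ring: h2.
have Y4 j : Y j = b1 * X j + b2 * Y j + b3 * F 1 (X j) + b4 * F 1 (Y j).
  by rewrite -{1}(F13 (Y j)) Y3 !FD !FM !FD !F11 ?F1 R1' R2' /b1 /b2 /b3 /b4; ring: h2.
have EX := indep4 Hind (lam := fun k : 'I_4 => nth 0 [:: a1 - 1; a2; a3; a4] k).
have EY := indep4 Hind (lam := fun k : 'I_4 => nth 0 [:: b1; b2 - 1; b3; b4] k).
have hX : forall j, \sum_k (fun k : 'I_4 => nth 0 [:: a1 - 1; a2; a3; a4] k) k * R k j = 0.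
  move=> j; rewrite (sum4 (fun k => nth 0 [:: a1 - 1; a2; a3; a4] k * R k j)) /R /=.
  transitivity ((a1 * X j + a2 * Y j + a3 * F 1 (X j) + a4 * F 1 (Y j)) - X j); first by ring.
  by rewrite -X4 subrr.
have hY : forall j, \sum_k (fun k : 'I_4 => nth 0 [:: b1; b2 - 1; b3; b4] k) k * R k j = 0.
  move=> j; rewrite (sum4 (fun k => nth 0 [:: b1; b2 - 1; b3; b4] k * R k j)) /R /=.
  transitivity ((b1 * X j + b2 * Y j + b3 * F 1 (X j) + b4 * F 1 (Y j)) - Y j); first by ring.
  by rewrite -Y4 subrr.
have q1 := EX hX o0; have q2 := EX hX o1; have q3 := EX hX o2; have q4 := EX hX o3.
have q7 := EY hY o2; have q8 := EY hY o3.
exact: (caseA_alg q1 q2 q3 q4 q7 q8).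
Qed.


Lemma mobius (t : L) : F 1 t * (t + 1) = 1 -> False.
Proof.
move=> E0.
have E1 : F 2 t * (F 1 t + 1) = 1.
  by have := congr1 (F 1) E0; rewrite FM FD F11 !F1.
have E2 : F 3 t * (F 2 t + 1) = 1.
  by have := congr1 (F 1) E1; rewrite FM FD F12 F11 !F1.
have E3 : t * (F 3 t + 1) = 1.
  by have := congr1 (F 1) E2; rewrite FM FD F13 F12 !F1.
have K1 : t * F 2 t = (t + 1) * (F 2 t * (F 1 t + 1)).
  transitivity (F 2 t * (F 1 t * (t + 1) + t + 1)); last by ring.
  by rewrite E0; ring: h2.
rewrite E1 mulr1 in K1.
have nz2 : F 2 t + 1 != 0.
  by apply/eqP => E; move: E2; rewrite E mulr0 => /eqP; rewrite eq_sym oner_eq0.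
have h3 : F 3 t = t.
  apply: (mulIf nz2); rewrite E2; apply/esym.
  by rewrite mulrDr K1 mulr1; ring: h2.
rewrite h3 in E3.
have nz1 : t + 1 != 0.
  by apply/eqP => E; move: E0; rewrite E mulr0 => /eqP; rewrite eq_sym oner_eq0.
have h1 : F 1 t = t by apply: (mulIf nz1); rewrite E0 E3.
apply: (no_cuberoot _ h1).
by rewrite -[RHS](subrr 1) -[X in X - 1]E3 oppL; ring: h2.
Qed.

Lemma colprop (p0 r0 p1 r1 : L) : p0 * r1 = p1 * r0 ->
  [|| p0 != 0, r0 != 0, p1 != 0 | r1 != 0] ->
  exists P R al be : L, [/\ (P != 0) || (R != 0), (al != 0) || (be != 0) &
     [/\ p0 = al * P, r0 = al * R, p1 = be * P & r1 = be * R]].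
Proof.
move=> D nz.
case: (boolP ((p0 != 0) || (r0 != 0))) => [nz0|].
  exists p0, r0, 1, (if p0 != 0 then p1 / p0 else r1 / r0).
  split=> //; first by rewrite oner_eq0.
  rewrite !mul1r; case: eqP => [p00|/eqP p0nz] /=; last first.
    split=> //; first by rewrite divfK.
    by apply: (mulfI p0nz); rewrite mulrA mulrCA divff // mulr1 D mulrC.
  move: nz0; rewrite p00 eqxx /= => r0nz.
  move: D; rewrite p00 mul0r => /esym/eqP; rewrite mulf_eq0 (negPf r0nz) orbF => /eqP ->.
  by split=> //; rewrite ?mulr0 ?(divfK r0nz).
rewrite negb_or => /andP [/negPn/eqP p00 /negPn/eqP r00].
move: nz; rewrite p00 r00 eqxx /= => nz1.
exists p1, r1, 0, 1; split=> //; first by rewrite eqxx oner_eq0.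
by split; rewrite ?mul0r ?mul1r.
Qed.

Lemma Fmod4 i x : F i x = F (i %% 4) x.
Proof.
rewrite {1}(divn_eq i 4); elim: (i %/ 4)%N => [|m IH]; first by rewrite mul0n add0n.
by rewrite mulSn -addnA addnC Fmod.
Qed.

Lemma caseB (X Y u v : 'I_4 -> L) (pp rr : nat -> L)
  (Hfree : forall d : 'I_4 -> L, (forall j, F 1 (d j) = d j) ->
      \sum_j d j * X j = 0 -> \sum_j d j * Y j = 0 -> forall j, d j = 0)
  (rk : forall w0 w1 : L, (forall k : nat, (k < 4)%N -> w0 * pp k + w1 * rr k = 0) ->
         w0 = 0 /\ w1 = 0)
  (H0 : forall j, X j = u j * pp 0%N + v j * rr 0%N)
  (H1 : forall j, Y j = u j * pp 1%N + v j * rr 1%N)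
  (H2 : forall j, F 1 (X j) + F 2 (Y j) = u j * pp 2%N + v j * rr 2%N)
  (H3 : forall j, F 2 (X j) + F 1 (Y j) + F 2 (Y j) = u j * pp 3%N + v j * rr 3%N)
  (D0 : pp 0%N * rr 1%N = pp 1%N * rr 0%N) : False.
Proof.
case: (boolP [|| pp 0%N != 0, rr 0%N != 0, pp 1%N != 0 | rr 1%N != 0]) => [nz|].
  have [P [R [al [be [PRnz abnz [e0 e1 e2 e3]]]]]] := colprop D0 nz.
  pose V j := u j * P + v j * R.
  have HX j : X j = al * V j by rewrite H0 e0 e1 /V; ring.
  have HY j : Y j = be * V j by rewrite H1 e2 e3 /V; ring.
  have Hind : forall c : 'I_4 -> L, (forall k : 'I_4, \sum_j c j * F k (V j) = 0) ->
      forall j, c j = 0.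
    move=> c Hk j0; apply/eqP/negPn/negP => cj0; apply: (descent Hfree cj0) => i.
    have Hi : \sum_j c j * F i (V j) = 0.
      have := Hk (Ordinal (ltn_pmod i (isT : (0 < 4)%N))); rewrite /= => E; rewrite -[RHS]E.
      by apply: eq_bigr => j _; rewrite -Fmod4.
    split.
      transitivity (F i al * \sum_j c j * F i (V j)); last by rewrite Hi mulr0.
      by rewrite mulr_sumr; apply: eq_bigr => j _; rewrite HX FM; ring.
    transitivity (F i be * \sum_j c j * F i (V j)); last by rewrite Hi mulr0.
    by rewrite mulr_sumr; apply: eq_bigr => j _; rewrite HY FM; ring.
  pose x0 := pp 2%N * rr 3%N - pp 3%N * rr 2%N.
  pose x1 := pp 3%N * R - P * rr 3%N.
  pose x2 := P * rr 2%N - pp 2%N * R.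
  pose l1 := x1 * F 1 al + x2 * F 1 be.
  pose l2 := x1 * F 2 be + x2 * (F 2 al + F 2 be).
  have EX := indep4 Hind (lam := fun k : 'I_4 => nth 0 [:: x0; l1; l2; 0] k).
  have hX : forall j, \sum_k (fun k : 'I_4 => nth 0 [:: x0; l1; l2; 0] k) k * F k (V j) = 0.
    move=> j; rewrite (sum4 (fun k => nth 0 [:: x0; l1; l2; 0] k * F k (V j))) /= Fn0.
    transitivity (x0 * V j + x1 * (F 1 (X j) + F 2 (Y j)) + x2 * (F 2 (X j) + F 1 (Y j) + F 2 (Y j))).
      by rewrite HX HY !FM /l1 /l2; ring.
    by rewrite H2 H3 /x0 /x1 /x2 /V; ring.
  have E0 := EX hX o0; have E1 := EX hX o1; have E2 := EX hX o2.
  rewrite /= in E0 E1 E2.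
  case: (boolP ((x1 != 0) || (x2 != 0))) => [xnz|]; last first.
    rewrite negb_or => /andP [/negPn/eqP x10 /negPn/eqP x20].
    have [R0 P0] : R = 0 /\ - P = 0.
      apply: rk => k; case: k => [|[|[|[|k]]]] // _.
      - by rewrite e0 e1; ring.
      - by rewrite e2 e3; ring.
      - by rewrite -[RHS]x20 /x2 !oppL; ring.
      - by rewrite -[RHS]x10 /x1 !oppL; ring.
    by move: PRnz; rewrite R0 -oppr_eq0 P0 eqxx.
  pose det := F 1 al * (F 2 al + F 2 be) - F 1 be * F 2 be.
  have det0 : det = 0.
    case/orP: xnz => xnz; apply/eqP; move: xnz; apply: contraNT => dnz.
      have : x1 * det = (F 2 al + F 2 be) * l1 - F 1 be * l2 by rewrite /det /l1 /l2; ring.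
      by rewrite E1 E2 !mulr0 subrr => /eqP; rewrite mulf_eq0 (negPf dnz) orbF.
    have : x2 * det = F 1 al * l2 - F 2 be * l1 by rewrite /det /l1 /l2; ring.
    by rewrite E1 E2 !mulr0 subrr => /eqP; rewrite mulf_eq0 (negPf dnz) orbF.
  have G : al * (F 1 al + F 1 be) + be * F 1 be = 0.
    apply/eqP; rewrite -(Feq0 1) !FD !FM !F11; apply/eqP.
    by rewrite -[RHS]det0 /det oppL FD !F11.
  have alnz : al != 0.
    apply/negP => /eqP al0; move: G; rewrite al0 mul0r add0r => /eqP.
    rewrite mulf_eq0 Feq0 orbb => be0.
    by move: abnz; rewrite al0 (eqP be0) eqxx.
  pose t := be / al.
  have hbe : be = t * al by rewrite /t divfK.
  have Fal : F 1 al != 0 by rewrite Feq0.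
  apply: (mobius (t := t)).
  move: G; rewrite hbe FM => G.
  have : al * F 1 al * (1 + F 1 t + t * F 1 t) = 0 by rewrite -[RHS]G; ring.
  move/eqP; rewrite !mulf_eq0 (negPf alnz) (negPf Fal) /= => /eqP E.
  by apply: c2; rewrite -[RHS]E; ring.
rewrite !negb_or => /and4P [/negPn/eqP p0 /negPn/eqP r0 /negPn/eqP p1 /negPn/eqP r1].
have HX j : X j = 0 by rewrite H0 p0 r0; ring.
have HY j : Y j = 0 by rewrite H1 p1 r1; ring.
pose d := fun j : 'I_4 => if j == o0 then (1 : L) else 0.
have dfix j : F 1 (d j) = d j by rewrite /d; case: ifP => _; rewrite ?F1 ?F0.
have dX : \sum_j d j * X j = 0 by apply: big1 => j _; rewrite HX mulr0.
have dY : \sum_j d j * Y j = 0 by apply: big1 => j _; rewrite HY mulr0.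
have := Hfree d dfix dX dY o0.
by rewrite /d eqxx => /eqP; rewrite oner_eq0.
Qed.

HB.instance Definition _ := GRing.isLinear.Build K (L * L)%type (L4 L) *:%R
  (@Umap K L) (Umap_linear cardK).

Lemma UmapE s : linfun (@Umap K L) s = Umap s.
Proof. exact: (lfunE (@Umap K L : {linear _ -> _})). Qed.

Lemma fst_sum (r : seq 'I_4) (G : 'I_4 -> L * L) : (\sum_(i <- r) G i).1 = \sum_(i <- r) (G i).1.
Proof. by apply: (big_morph fst) => //. Qed.

Lemma snd_sum (r : seq 'I_4) (G : 'I_4 -> L * L) : (\sum_(i <- r) G i).2 = \sum_(i <- r) (G i).2.
Proof. by apply: (big_morph snd) => //. Qed.

HB.instance Definition _ (A : 'M[L]_(2, 4)) := GRing.isLinear.Build K (L * L)%type (L4 L) *:%R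
  (rowmap A) (rowmap_linear A).

Lemma rowmapE (A : 'M[L]_(2, 4)) s : linfun (rowmap A) s = rowmap A s.
Proof. exact: (lfunE (rowmap A : {linear _ -> _})). Qed.

Lemma solve2 (p0 r0 p1 r1 p2 r2 uu vv : L) : p0 * r1 - p1 * r0 != 0 ->
  uu * p2 + vv * r2 = (r1 * p2 - p1 * r2) / (p0 * r1 - p1 * r0) * (uu * p0 + vv * r0) +
    (p0 * r2 - r0 * p2) / (p0 * r1 - p1 * r0) * (uu * p1 + vv * r1).
Proof. by move=> D; field. Qed.

Lemma main (A : 'M[L]_(2, 4)) : \rank A = 2%N -> (\dim (Uspace L :&: Hspace A)%VS <= 3)%N.
Proof.
move=> rkA; rewrite leqNgt; apply/negP => dim4.
set W := (Uspace L :&: Hspace A)%VS.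
have frB : free (vbasis W) := basis_free (vbasisP W).
have fr4 : free (take 4 (vbasis W)).
  by apply: (@catl_free _ _ (drop 4 (vbasis W))); rewrite cat_take_drop.
have mem4 w : w \in take 4 (vbasis W) -> w \in W.
  by move/mem_take; apply: vbasis_mem.
have sz : size (take 4 (vbasis W)) = 4%N by rewrite size_takel // size_tuple.
move: fr4 mem4 sz; case: (take 4 (vbasis W)) => [|w0 [|w1 [|w2 [|w3 [|w4 s']]]]] //= fr4 mem4 _.
pose w (j : 'I_4) := [:: w0; w1; w2; w3]`_j.
have wW j : w j \in W by apply: mem4; apply: mem_nth; case: j.
have wfree : forall k : 'I_4 -> K, \sum_j k j *: w j = 0 -> forall j, k j = 0.
  by move=> k Hk; apply: (elimT (@freeP _ _ _ [tuple w0; w1; w2; w3]) fr4 k Hk).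
have : forall j, exists x : (L * L)%type, w j = Umap x.
  move=> j; have /memv_capP [/memv_imgP [x _ ->] _] := wW j.
  by exists x; rewrite UmapE.
case/(@fin_all_exists _ (fun _ => (L * L)%type) (fun j x => w j = Umap x)) => s Hs.
have : forall j, exists x : (L * L)%type, w j = rowmap A x.
  move=> j; have /memv_capP [_ /memv_imgP [x _ ->]] := wW j.
  by exists x; rewrite rowmapE.
case/(@fin_all_exists _ (fun _ => (L * L)%type) (fun j x => w j = rowmap A x)) => p Hp.
pose X j := (s j).1; pose Y j := (s j).2; pose u j := (p j).1; pose v j := (p j).2.
pose pp n := match n with 0%N => A 0 o0 | 1%N => A 0 o1 | 2%N => A 0 o2 | _ => A 0 o3 end.
pose rr n := match n with 0%N => A 1 o0 | 1%N => A 1 o1 | 2%N => A 1 o2 | _ => A 1 o3 end.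
have coord j (i : 'I_4) : Umap (s j) i = rowmap A (p j) i by rewrite -Hs -Hp.
have Fq (x : L) : x ^+ #|K| = F 1 x by rewrite /F expn1.
have H0 j : X j = u j * pp 0%N + v j * rr 0%N by have := coord j o0; rewrite !ffunE.
have H1 j : Y j = u j * pp 1%N + v j * rr 1%N by have := coord j o1; rewrite !ffunE.
have H2 j : F 1 (X j) + F 2 (Y j) = u j * pp 2%N + v j * rr 2%N.
  by have := coord j o2; rewrite !ffunE /= Fq.
have H3 j : F 2 (X j) + F 1 (Y j) + F 2 (Y j) = u j * pp 3%N + v j * rr 3%N.
  by have := coord j o3; rewrite !ffunE /= Fq.
have Hfree : forall d : 'I_4 -> L, (forall j, F 1 (d j) = d j) ->
      \sum_j d j * X j = 0 -> \sum_j d j * Y j = 0 -> forall j, d j = 0.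
  move=> d dfix dX dY.
  have : forall j, exists k : K, d j = k%:A by move=> j; apply: Ffix.
  case/(@fin_all_exists _ (fun _ => K) (fun j k => d j = k%:A)) => kk Hkk.
  have Hsum : \sum_j kk j *: w j = 0.
    have -> : \sum_j kk j *: w j = Umap (\sum_j kk j *: s j).
      by rewrite linear_sum; apply: eq_bigr => j _; rewrite linearZ Hs.
    have e1 : (\sum_j kk j *: s j).1 = 0.
      rewrite fst_sum -[RHS]dX; apply: eq_bigr => j _.
      by rewrite /= Hkk mulr_algl.
    have e2 : (\sum_j kk j *: s j).2 = 0.
      rewrite snd_sum -[RHS]dY; apply: eq_bigr => j _.
      by rewrite /= Hkk mulr_algl.
    move: e1 e2; case: (\sum_j kk j *: s j) => x y /= -> ->.
    exact: (linear0 (@Umap K L : {linear _ -> _})).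
  by move=> j; rewrite Hkk (wfree kk Hsum j) scale0r.
have rk : forall z0 z1 : L, (forall k : nat, (k < 4)%N -> z0 * pp k + z1 * rr k = 0) ->
    z0 = 0 /\ z1 = 0.
  move=> z0 z1 Hk.
  have E (i : 'I_4) : z0 * A 0 i + z1 * A 1 i = 0.
    case: i => [[|[|[|[|i]]]] Hi] //.
    - by rewrite (_ : Ordinal Hi = o0) ?(Hk 0%N) //; apply: val_inj.
    - by rewrite (_ : Ordinal Hi = o1) ?(Hk 1%N) //; apply: val_inj.
    - by rewrite (_ : Ordinal Hi = o2) ?(Hk 2%N) //; apply: val_inj.
    - by rewrite (_ : Ordinal Hi = o3) ?(Hk 3%N) //; apply: val_inj.
  have rf : row_free A by rewrite /row_free rkA.
  have : (\row_(j < 2) [:: z0; z1]`_j) *m A = 0.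
    by apply/rowP => i; rewrite -rowmap_spec mxE E.
  move/eqP; rewrite mulmx_free_eq0 // => /eqP/rowP H.
  have := H (Ordinal (isT : (0 < 2)%N)); have := H (Ordinal (isT : (1 < 2)%N)).
  by rewrite !mxE /= => -> ->.
case: (eqVneq (pp 0%N * rr 1%N) (pp 1%N * rr 0%N)) => [D0 | Dn].
  exact: (caseB Hfree rk H0 H1 H2 H3 D0).
pose Dd := pp 0%N * rr 1%N - pp 1%N * rr 0%N.
have Dnz : Dd != 0 by rewrite /Dd subr_eq0.
apply: (@caseA X Y ((rr 1%N * pp 2%N - pp 1%N * rr 2%N) / Dd)
  ((pp 0%N * rr 2%N - rr 0%N * pp 2%N) / Dd) ((rr 1%N * pp 3%N - pp 1%N * rr 3%N) / Dd)
  ((pp 0%N * rr 3%N - rr 0%N * pp 3%N) / Dd) Hfree) => j.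
  by rewrite H2 H0 H1 /Dd; apply: solve2.
by rewrite H3 H0 H1 /Dd; apply: solve2.
Qed.



End S.

Local Close Scope ring_scope.

Theorem theorem4p5 (h : nat) (h_odd : odd h)
  (K : finFieldType) (cardK : #|K| = (2 ^ h)%N)
  (L : fieldExtType K) (dimL : \dim (fullv : {vspace L}) = 4%N) :
  forall A : 'M[L]_(2, 4), \rank A = 2%N ->
    (\dim (Uspace L :&: Hspace A)%VS <= 3)%N.
Proof.
move=> A; exact: (main h_odd cardK dimL).
Qed.
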